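(* Let $n\ge3$ and let $K_0:[0,\infty)\to[0,\infty)$ be bounded and continuous with $K_0(0)>0$. Then there is a constant $M>0$ such that every radially symmetric nonnegative $C^2$ solution $v$ of $$\Delta v+K_0(|x|)\,v^{\frac{n}{n-2}}=0\ \text{in }\mathbb{R}^n,\qquad \lim_{|x|\to\infty}v(x)=\beta,$$ with any $\beta>0$, satisfies $v\le M$ on $\mathbb{R}^n$; $M$ does not depend on $\beta$. *)

(* Defs.v *)
(* classical reals. Points of R^n are represented as
   x : nat -> R, of which only the coordinates x 0, ..., x (n-1) matter. *)
From Stdlib Require Import Reals.
Open Scope R_scope.

Fixpoint sum_upto (n : nat) (f : nat -> R) : R :=
  match n with
  | O => 0
  | S m => sum_upto m f + f m
  end.

Definition normn (n : nat) (x : nat -> R) : R :=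
  sqrt (sum_upto n (fun i => x i * x i)).

Definition subv (x y : nat -> R) : nat -> R := fun i => x i - y i.

Definition shift (x : nat -> R) (i : nat) (t : R) : nat -> R :=
  fun j => if Nat.eqb j i then x j + t else x j.

Definition has_partial (f : (nat -> R) -> R) (i : nat) (x : nat -> R) (l : R) : Prop :=
  derivable_pt_lim (fun t => f (shift x i t)) 0 l.

Definition contn (n : nat) (f : (nat -> R) -> R) : Prop :=
  forall x eps, 0 < eps -> exists delta, 0 < delta /\
    forall y, normn n (subv y x) < delta -> Rabs (f y - f x) < eps.

(* f is C^2 on R^n, with first partials D1 i and second partials D2 i j
   (D2 i j = d/dx_j (d f/dx_i)); all continuous *)
Definition C2n (n : nat) (f : (nat -> R) -> R)
  (D1 : nat -> (nat -> R) -> R) (D2 : nat -> nat -> (nat -> R) -> R) : Prop :=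
  contn n f /\
  (forall i, (i < n)%nat -> contn n (D1 i) /\ forall x, has_partial f i x (D1 i x)) /\
  (forall i j, (i < n)%nat -> (j < n)%nat ->
     contn n (D2 i j) /\ forall x, has_partial (D1 i) j x (D2 i j x)).

Definition laplacian (n : nat) (D2 : nat -> nat -> (nat -> R) -> R) (x : nat -> R) : R :=
  sum_upto n (fun i => D2 i i x).

(* a^p for a >= 0, p > 0, with 0^p = 0 *)
Definition rpow (a p : R) : R := if Rle_dec a 0 then 0 else Rpower a p.

Definition radially_symmetric (n : nat) (f : (nat -> R) -> R) : Prop :=
  forall x y, normn n x = normn n y -> f x = f y.

(* Main.v *)
Require Import Defs.
From Stdlib Require Import Reals Lra Lia Psatz FunctionalExtensionality.
Open Scope R_scope.

Lemma nonincr (f f' : R->R) a b : a <= b ->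
  (forall c, a<=c<=b -> derivable_pt_lim f c (f' c)) ->
  (forall c, a<=c<=b -> f' c <= 0) -> f b <= f a.
Proof.
  intros Hab Hd Hn. destruct Hab as [Hab|Hab].
  - destruct (MVT_cor2 f f' a b Hab Hd) as [c [Hc Hc2]].
    assert (f' c * (b - a) <= 0).
    { assert (f' c <= 0) by (apply Hn; lra). nra. }
    lra.
  - subst; lra.
Qed.

Lemma nondecr (f f' : R->R) a b : a <= b ->
  (forall c, a<=c<=b -> derivable_pt_lim f c (f' c)) ->
  (forall c, a<=c<=b -> 0 <= f' c) -> f a <= f b.
Proof.
  intros Hab Hd Hn. destruct Hab as [Hab|Hab].
  - destruct (MVT_cor2 f f' a b Hab Hd) as [c [Hc Hc2]].
    assert (0 <= f' c * (b - a)).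
    { assert (0 <= f' c) by (apply Hn; lra). nra. }
    lra.
  - subst; lra.
Qed.

Lemma rpow_pos a p : 0 < a -> rpow a p = Rpower a p.
Proof. intros. unfold rpow. destruct (Rle_dec a 0); [lra|auto]. Qed.

Lemma rpow_nonneg a p : 0 <= rpow a p.
Proof. unfold rpow. destruct (Rle_dec a 0); [lra|]. unfold Rpower. left; apply exp_pos. Qed.

Lemma Rpower_pos a p : 0 < Rpower a p.
Proof. unfold Rpower; apply exp_pos. Qed.

Lemma Rpower_le_base a b p : 0 <= p -> 0 < a <= b -> Rpower a p <= Rpower b p.
Proof. intros. apply Rle_Rpower_l; auto. Qed.

Lemma rpow_mono a b p : 0 <= p -> a <= b -> rpow a p <= rpow b p.
Proof.
  intros Hp Hab. unfold rpow. destruct (Rle_dec a 0); destruct (Rle_dec b 0).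
  - lra.
  - left; apply Rpower_pos.
  - lra.
  - apply Rle_Rpower_l; lra.
Qed.

Lemma dpl_plus f g x a b : derivable_pt_lim f x a -> derivable_pt_lim g x b ->
  derivable_pt_lim (fun s => f s + g s) x (a + b).
Proof. intros. apply (derivable_pt_lim_plus f g x a b); auto. Qed.

Lemma dpl_mult f g x a b : derivable_pt_lim f x a -> derivable_pt_lim g x b ->
  derivable_pt_lim (fun s => f s * g s) x (a * g x + f x * b).
Proof. intros. apply (derivable_pt_lim_mult f g x a b); auto. Qed.

Lemma dpl_const c x : derivable_pt_lim (fun _ => c) x 0.
Proof. apply (derivable_pt_lim_const c x). Qed.

Lemma dpl_scal c f x a : derivable_pt_lim f x a ->
  derivable_pt_lim (fun s => c * f s) x (c * a).
Proof. intros. replace (c*a) with (0 * f x + c * a) by ring. apply dpl_mult; auto. apply dpl_const. Qed.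

Lemma dpl_comp f g x a b : derivable_pt_lim f x a -> derivable_pt_lim g (f x) b ->
  derivable_pt_lim (fun s => g (f s)) x (b * a).
Proof. intros. apply (derivable_pt_lim_comp f g x a b); auto. Qed.

Lemma dpl_id x : derivable_pt_lim (fun s => s) x 1.
Proof. apply (derivable_pt_lim_id x). Qed.

Lemma dpl_eq f x a b : a = b -> derivable_pt_lim f x a -> derivable_pt_lim f x b.
Proof. intros; subst; auto. Qed.

Definition ODEhyp n (K u U1 U2 : R -> R) : Prop :=
  (3<=n)%nat /\ (forall r, 0<=r -> 0<=K r) /\ (forall r, derivable_pt_lim u r (U1 r)) /\
  (forall r, derivable_pt_lim U1 r (U2 r)) /\ U1 0 = 0 /\ (forall r, 0<=r -> 0<=u r) /\
  (forall r, 0<r -> U2 r + (INR n - 1)*U1 r / r + K r * rpow (u r) (INR n / INR (n-2)) = 0).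

Lemma w_deriv n K u U1 U2 : ODEhyp n K u U1 U2 -> forall r, 0 <= r ->
  derivable_pt_lim (fun s => s^(n-1) * U1 s) r
    (-(r^(n-1) * K r * rpow (u r) (INR n / INR (n-2)))).
Proof.
  intros (Hn & HK & Hu & HU & H0 & Hpos & Hode) r Hr.
  set (P := INR n / INR (n-2)).
  assert (D := derivable_pt_lim_mult (fun s => s^(n-1)) U1 r _ _ (derivable_pt_lim_pow r (n-1)) (HU r)).
  eapply derivable_pt_lim_ext in D; [| intro z; reflexivity].
  replace (-(r^(n-1) * K r * rpow (u r) P)) with
    (INR (n - 1) * r ^ Init.Nat.pred (n - 1) * U1 r + r ^ (n - 1) * U2 r); [exact D|].
  destruct n as [|[|[|j]]]; try lia.
  replace (S (S (S j)) - 1)%nat with (S (S j)) by lia. simpl Init.Nat.pred.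
  destruct Hr as [Hr|Hr].
  - specialize (Hode r Hr). fold P in Hode.
    assert (E: U2 r = - ((INR (S (S (S j))) - 1) * U1 r / r) - K r * rpow (u r) P) by lra.
    rewrite E. rewrite (S_INR (S (S j))). simpl pow. field. lra.
  - subst r. simpl. ring.
Qed.

Lemma W_nonincr n K u U1 U2 : ODEhyp n K u U1 U2 -> forall a b, 0 <= a <= b ->
  b^(n-1) * U1 b <= a^(n-1) * U1 a.
Proof.
  intros H a b Hab.
  apply (nonincr (fun s => s^(n-1) * U1 s)
     (fun r => -(r^(n-1) * K r * rpow (u r) (INR n / INR (n-2))))); [lra| |].
  - intros c Hc. apply (w_deriv n K u U1 U2 H). lra.
  - intros c Hc. destruct H as (Hn & HK & _).
    assert (0 <= c^(n-1)) by (apply pow_le; lra).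
    assert (0 <= K c) by (apply HK; lra).
    assert (0 <= rpow (u c) (INR n / INR (n - 2))) by apply rpow_nonneg.
    assert (0 <= c ^ (n - 1) * K c) by (apply Rmult_le_pos; auto).
    assert (0 <= c ^ (n - 1) * K c * rpow (u c) (INR n / INR (n - 2))) by (apply Rmult_le_pos; auto).
    lra.
Qed.

Lemma U1_nonpos n K u U1 U2 : ODEhyp n K u U1 U2 -> forall r, 0 <= r -> U1 r <= 0.
Proof.
  intros H r Hr. destruct Hr as [Hr|Hr].
  - assert (W := W_nonincr n K u U1 U2 H 0 r ltac:(lra)).
    destruct H as (Hn & _ & _ & _ & H0 & _).
    rewrite H0, Rmult_0_r in W.
    assert (0 < r^(n-1)) by (apply pow_lt; lra).
    destruct (Rle_dec (U1 r) 0); auto. nra.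
  - subst. destruct H as (_ & _ & _ & _ & H0 & _). lra.
Qed.

Lemma u_nonincr n K u U1 U2 : ODEhyp n K u U1 U2 -> forall a b, 0 <= a <= b -> u b <= u a.
Proof.
  intros H a b Hab. apply (nonincr u U1); [lra| |].
  - intros; destruct H as (_ & _ & Hu & _); auto.
  - intros; apply (U1_nonpos n K u U1 U2 H); lra.
Qed.

Lemma u_ge_beta n K u U1 U2 beta : ODEhyp n K u U1 U2 ->
  (forall eps, 0 < eps -> exists R0, forall r, 0 <= r -> R0 < r -> Rabs (u r - beta) < eps) ->
  forall r, 0 <= r -> beta <= u r.
Proof.
  intros H Hlim r Hr. destruct (Rle_dec beta (u r)) as [|Hlt]; auto.
  destruct (Hlim (beta - u r) ltac:(lra)) as [R0 HR].
  set (s := Rmax r (R0 + 1)).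
  assert (r <= s) by apply Rmax_l. assert (R0 + 1 <= s) by apply Rmax_r.
  specialize (HR s ltac:(lra) ltac:(lra)).
  assert (u s <= u r) by (apply (u_nonincr n K u U1 U2 H); lra).
  apply Rabs_def2 in HR. lra.
Qed.

Lemma INR_n2 n : (3 <= n)%nat -> INR (n-2) = INR n - 2.
Proof. intros. rewrite minus_INR by lia. simpl. lra. Qed.

Lemma INR_ge3 n : (3 <= n)%nat -> 3 <= INR n.
Proof. intros. replace 3 with (INR 3) by (simpl; ring). apply le_INR; auto. Qed.

Lemma P_pos n : (3 <= n)%nat -> 0 < INR n / INR (n-2).
Proof.
  intros. rewrite INR_n2 by auto. assert (3 <= INR n) by (apply INR_ge3; auto).
  apply Rdiv_lt_0_compat; lra.
Qed.

Lemma G_upper n K u U1 U2 B : ODEhyp n K u U1 U2 -> (forall r, 0<=r -> K r <= B) ->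
  forall r, 0<=r -> -(r^(n-1)*U1 r) <= B * rpow (u 0) (INR n / INR (n-2)) * r^n / INR n.
Proof.
  intros H HB r Hr.
  set (P := INR n / INR (n-2)). set (A := rpow (u 0) P).
  assert (Hn: (3<=n)%nat) by apply H.
  assert (HN: 3 <= INR n) by (apply INR_ge3; auto).
  assert (f0 : forall s, 0 <= s ->
    derivable_pt_lim (fun s => (-1) * (s^(n-1)*U1 s) + (-(B*A/INR n)) * s^n) s
      ((-1) * (-(s^(n-1) * K s * rpow (u s) P)) + (-(B*A/INR n)) * (INR n * s^(Init.Nat.pred n)))).
  { intros s Hs. apply dpl_plus; apply dpl_scal.
    - apply (w_deriv n K u U1 U2 H); auto.
    - apply derivable_pt_lim_pow. }
  assert (Hle: (fun s => (-1) * (s^(n-1)*U1 s) + (-(B*A/INR n)) * s^n) r <=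
               (fun s => (-1) * (s^(n-1)*U1 s) + (-(B*A/INR n)) * s^n) 0).
  { apply (nonincr _ _ 0 r ltac:(lra) (fun c Hc => f0 c (proj1 Hc))).
    intros c Hc.
    replace (Init.Nat.pred n) with (n-1)%nat by lia.
    assert (0 <= c^(n-1)) by (apply pow_le; lra).
    assert (H' := H).
    destruct H' as (_ & HK & _ & _ & _ & Hpos & _).
    assert (0 <= K c) by (apply HK; lra).
    assert (K c <= B) by (apply HB; lra).
    assert (0 <= rpow (u c) P) by apply rpow_nonneg.
    assert (rpow (u c) P <= A).
    { apply rpow_mono. left; apply P_pos; auto.
      apply (u_nonincr n K u U1 U2 H); lra. }
    assert (K c * rpow (u c) P <= B * A) by nra.
    replace (-1 * - (c ^ (n - 1) * K c * rpow (u c) P) + - (B * A / INR n) * (INR n * c ^ (n - 1)))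
      with (c^(n-1) * (K c * rpow (u c) P - B * A)) by (field; lra).
    assert (K c * rpow (u c) P - B * A <= 0) by lra. nra. }
  simpl in Hle.
  rewrite !pow_i in Hle by lia.
  unfold Rdiv in *. lra.
Qed.

Lemma u_decr_bound n K u U1 U2 B : ODEhyp n K u U1 U2 -> (forall r, 0<=r -> K r <= B) ->
  forall r, 0<=r -> u 0 - B * rpow (u 0) (INR n / INR (n-2)) * r^2 / (2 * INR n) <= u r.
Proof.
  intros H HB r Hr.
  set (P := INR n / INR (n-2)). set (A := rpow (u 0) P).
  assert (Hn: (3<=n)%nat) by apply H.
  assert (HN: 3 <= INR n) by (apply INR_ge3; auto).
  assert (Hle: (fun s => u s + (B*A/(2*INR n)) * s^2) 0 <=
               (fun s => u s + (B*A/(2*INR n)) * s^2) r).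
  { apply (nondecr (fun s => u s + (B*A/(2*INR n)) * s^2) (fun s => U1 s + (B*A/(2*INR n)) * (INR 2 * s^(Init.Nat.pred 2))) 0 r Hr).
    - intros c Hc. apply dpl_plus; [apply H|apply dpl_scal, derivable_pt_lim_pow].
    - intros c Hc. simpl. destruct Hc as [[Hc|Hc] _].
      + assert (G := G_upper n K u U1 U2 B H HB c ltac:(lra)). fold P A in G.
        assert (E: c^n = c * c^(n-1)).
        { replace n with (S (n-1)) at 1 by lia. simpl. ring. }
        rewrite E in G.
        assert (0 < c^(n-1)) by (apply pow_lt; lra).
        assert (G2: c^(n-1) * (- U1 c) <= c^(n-1) * (B*A*c/INR n)).
        { unfold Rdiv in *. nra. }
        apply Rmult_le_reg_l in G2; auto.
        assert (B * A / (2 * INR n) * (1 + 1) * (c * 1) = B * A * c / INR n) by (field; lra).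
        lra.
      + subst c. destruct H as (_ & _ & _ & _ & H0 & _). rewrite H0. lra. }
  simpl in Hle. unfold Rdiv in *. lra.
Qed.

Lemma G_lower n K u U1 U2 k delta : ODEhyp n K u U1 U2 ->
  (forall s, 0<=s<=delta -> k <= K s) -> 0 <= k ->
  forall r, 0<=r<=delta -> k * rpow (u r) (INR n / INR (n-2)) * r^n / INR n <= -(r^(n-1)*U1 r).
Proof.
  intros H Hk Hk0 r Hr.
  set (P := INR n / INR (n-2)). set (Pr := rpow (u r) P).
  assert (Hn: (3<=n)%nat) by apply H.
  assert (HN: 3 <= INR n) by (apply INR_ge3; auto).
  assert (f0 : forall s, 0 <= s ->
    derivable_pt_lim (fun s => (-1) * (s^(n-1)*U1 s) + (-(k*Pr/INR n)) * s^n) s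
      ((-1) * (-(s^(n-1) * K s * rpow (u s) P)) + (-(k*Pr/INR n)) * (INR n * s^(Init.Nat.pred n)))).
  { intros s Hs. apply dpl_plus; apply dpl_scal.
    - apply (w_deriv n K u U1 U2 H); auto.
    - apply derivable_pt_lim_pow. }
  assert (Hle: (fun s => (-1) * (s^(n-1)*U1 s) + (-(k*Pr/INR n)) * s^n) 0 <=
               (fun s => (-1) * (s^(n-1)*U1 s) + (-(k*Pr/INR n)) * s^n) r).
  { apply (nondecr _ _ 0 r ltac:(lra) (fun c Hc => f0 c (proj1 Hc))).
    intros c Hc.
    replace (Init.Nat.pred n) with (n-1)%nat by lia.
    assert (0 <= c^(n-1)) by (apply pow_le; lra).
    assert (k <= K c) by (apply Hk; lra).
    assert (0 <= Pr) by apply rpow_nonneg.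
    assert (Pr <= rpow (u c) P).
    { apply rpow_mono. left; apply P_pos; auto.
      apply (u_nonincr n K u U1 U2 H); lra. }
    assert (k * Pr <= K c * rpow (u c) P) by nra.
    replace (-1 * - (c ^ (n - 1) * K c * rpow (u c) P) + - (k * Pr / INR n) * (INR n * c ^ (n - 1)))
      with (c^(n-1) * (K c * rpow (u c) P - k * Pr)) by (field; lra).
    assert (0 <= K c * rpow (u c) P - k * Pr) by lra. nra. }
  simpl in Hle.
  rewrite !pow_i in Hle by lia.
  unfold Rdiv in *. lra.
Qed.

Lemma Rpower_neg_pow n x : 0 < x -> Rpower x (- INR n) = / x^n.
Proof. intros. rewrite Rpower_Ropp, Rpower_pow; auto. Qed.

Lemma G_upper2 n K u U1 U2 : ODEhyp n K u U1 U2 ->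
  forall r, 0<r -> -(r^(n-1)*U1 r) <= (INR n - 2) * u r * r^(n-2).
Proof.
  intros H r Hr.
  assert (Hn: (3<=n)%nat) by apply H.
  assert (HN: 3 <= INR n) by (apply INR_ge3; auto).
  set (m := INR n - 2).
  set (g := -(r^(n-1)*U1 r)).
  assert (Hg : 0 <= g).
  { unfold g. assert (U1 r <= 0) by (apply (U1_nonpos n K u U1 U2 H); lra).
    assert (0 < r^(n-1)) by (apply pow_lt; lra). nra. }
  assert (Hm : 1 <= m) by (unfold m; lra).
  set (f := fun s => u s + (-(g/m)) * Rpower s (-m)).
  assert (Hf : forall S, r <= S -> f S <= f r).
  { intros S HS.
    apply (nonincr f (fun s => U1 s + (-(g/m)) * (-m * Rpower s (-m-1))) r S HS).
    - intros c Hc. unfold f. apply dpl_plus; [apply H|apply dpl_scal].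
      replace (-m-1) with (-m - 1) by ring. apply derivable_pt_lim_power. lra.
    - intros c Hc.
      assert (Hc0 : 0 < c) by lra.
      assert (E : Rpower c (-m-1) = / c^(n-1)).
      { rewrite <- Rpower_neg_pow by auto. f_equal. rewrite minus_INR by lia. unfold m. simpl. ring. }
      rewrite E.
      assert (W := W_nonincr n K u U1 U2 H r c ltac:(lra)). fold g in W.
      assert (0 < c^(n-1)) by (apply pow_lt; lra).
      replace (U1 c + - (g / m) * (- m * / c ^ (n - 1))) with ((c^(n-1) * U1 c + g) / c^(n-1))
        by (field; lra).
      assert (0 < / c^(n-1)) by (apply Rinv_0_lt_compat; auto).
      unfold Rdiv. assert (c ^ (n - 1) * U1 c + g <= 0) by (unfold g; lra). nra. }
  set (X := f r).
  assert (HX : 0 <= X).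
  { destruct (Rle_dec 0 X) as [|HX]; auto. exfalso.
    set (S := Rmax (Rmax r 1) ((g/m)/(-X) + 1)).
    assert (S1: r <= S) by (unfold S; eapply Rle_trans; [apply Rmax_l|apply Rmax_l]).
    assert (S2: 1 <= S) by (unfold S; eapply Rle_trans; [apply Rmax_r|apply Rmax_l]).
    assert (S3: (g/m)/(-X) + 1 <= S) by (unfold S; apply Rmax_r).
    specialize (Hf S S1). unfold f in Hf. fold X in Hf.
    assert (u S >= 0) by (destruct H as (_&_&_&_&_&Hp&_); apply Rle_ge, Hp; lra).
    assert (RS : Rpower S (-m) <= / S).
    { rewrite Rpower_Ropp. apply Rinv_le_contravar; [lra|].
      rewrite <- (Rpower_1 S) at 1 by lra. apply Rle_Rpower; lra. }
    assert (0 < Rpower S (-m)) by apply Rpower_pos.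
    assert (Hgm : 0 <= g/m) by (unfold Rdiv; apply Rmult_le_pos; [lra|left; apply Rinv_0_lt_compat; lra]).
    assert (T1 : (g/m) * Rpower S (-m) <= (g/m) * / S) by (apply Rmult_le_compat_l; auto).
    assert (T2 : (g/m) * / S < -X).
    { assert (0 < -X) by lra.
      assert ((g/m) < (-X) * S).
      { assert (HH: (g/m)/(-X) < S) by lra.
        apply (Rmult_lt_compat_l (-X)) in HH; auto.
        replace (- X * (g / m / - X)) with (g/m) in HH by (field; lra). lra. }
      apply (Rmult_lt_reg_r S); [lra|]. rewrite Rmult_assoc, Rinv_l by lra. lra. }
    assert (- (g / m) * Rpower S (- m) = - ((g / m) * Rpower S (- m))) by ring.
    change (u r + - (g / m) * Rpower r (- m)) with X in Hf. lra. }
  unfold X, f in HX.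
  assert (E : Rpower r (-m) = / r^(n-2)).
  { rewrite <- Rpower_neg_pow by auto. f_equal. rewrite INR_n2 by auto. reflexivity. }
  rewrite E in HX.
  assert (0 < r^(n-2)) by (apply pow_lt; lra).
  assert (HX2 : (g/m) * / r^(n-2) <= u r) by lra.
  apply (Rmult_le_compat_r (m * r^(n-2))) in HX2; [|nra].
  replace (g / m * / r ^ (n - 2) * (m * r ^ (n - 2))) with g in HX2 by (field; lra).
  fold m. lra.
Qed.

Lemma Rpower_split x y s k P : 0 < x -> 0 < y -> 0 < s ->
  Rpower (x / (y * s^k)) P = Rpower x P * Rpower y (-P) * Rpower s (-(INR k * P)).
Proof.
  intros. unfold Rpower.
  assert (0 < s^k) by (apply pow_lt; auto).
  unfold Rdiv. rewrite ln_mult by (auto; apply Rinv_0_lt_compat; apply Rmult_lt_0_compat; auto).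
  rewrite ln_Rinv by (apply Rmult_lt_0_compat; auto).
  rewrite ln_mult by auto. rewrite ln_pow by auto.
  rewrite <- !exp_plus. f_equal. ring.
Qed.

Lemma log_step n K u U1 U2 k delta beta : ODEhyp n K u U1 U2 ->
  0 < k -> (forall s, 0<=s<=delta -> k <= K s) -> 0 < beta ->
  (forall r, 0 <= r -> beta <= u r) ->
  forall r1, 0 < r1 <= delta ->
  (2 / (INR n - 2)) * (k * Rpower (INR n - 2) (- (INR n / INR (n-2)))) * (ln delta - ln r1)
    <= Rpower (-(r1^(n-1)*U1 r1)) (- (2 / (INR n - 2))).
Proof.
  intros H Hk HK Hb Hub r1 Hr1.
  assert (Hn: (3<=n)%nat) by apply H.
  assert (HN: 3 <= INR n) by (apply INR_ge3; auto).
  set (m := INR n - 2). set (P := INR n / INR (n-2)). set (q := 2 / m).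
  set (c := k * Rpower m (-P)).
  set (G := fun s => -(s^(n-1)*U1 s)).
  assert (HP : P = q + 1) by (unfold P, q, m; rewrite INR_n2 by auto; field; lra).
  assert (Hm : 1 <= m) by (unfold m; lra).
  assert (Hq : 0 < q) by (unfold q; apply Rdiv_lt_0_compat; lra).
  assert (Hc : 0 < c) by (unfold c; apply Rmult_lt_0_compat; auto; apply Rpower_pos).
  assert (Gpos : forall s, 0 < s <= delta -> 0 < G s).
  { intros s Hs. assert (L := G_lower n K u U1 U2 k delta H HK ltac:(lra) s ltac:(lra)).
    fold P in L. unfold G.
    assert (0 < u s) by (specialize (Hub s ltac:(lra)); lra).
    rewrite rpow_pos in L by auto.
    assert (0 < Rpower (u s) P) by apply Rpower_pos.
    assert (0 < s^n) by (apply pow_lt; lra).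
    assert (0 < k * Rpower (u s) P * s ^ n / INR n).
    { apply Rdiv_lt_0_compat; [|lra]. repeat apply Rmult_lt_0_compat; auto. }
    lra. }
  assert (Gd : forall s, 0 <= s -> derivable_pt_lim G s (s^(n-1) * K s * rpow (u s) P)).
  { intros s Hs. unfold G.
    apply (dpl_eq _ _ (-1 * (-(s^(n-1) * K s * rpow (u s) P)))); [ring|].
    apply (derivable_pt_lim_ext (fun s => -1 * (s^(n-1)*U1 s))); [intro; ring|].
    apply dpl_scal. apply (w_deriv n K u U1 U2 H); auto. }
  set (Phi := fun s => Rpower (G s) (-q) + (q*c) * ln s).
  assert (HPhi : Phi delta <= Phi r1).
  { apply (nonincr Phi (fun s => (-q * Rpower (G s) (-q-1)) * (s^(n-1) * K s * rpow (u s) P)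
                                  + (q*c) * / s) r1 delta ltac:(lra)).
    - intros s Hs. unfold Phi. apply dpl_plus.
      + apply (dpl_comp G (fun x => Rpower x (-q))); [apply Gd; lra|].
        replace (-q-1) with (-q - 1) by ring. apply derivable_pt_lim_power. apply Gpos; lra.
      + apply dpl_scal. apply derivable_pt_lim_ln. lra.
    - intros s Hs.
      assert (Hs0 : 0 < s) by lra.
      assert (HG := Gpos s ltac:(lra)).
      assert (Hus : 0 < u s) by (specialize (Hub s ltac:(lra)); lra).
      rewrite rpow_pos by auto.
      assert (U := G_upper2 n K u U1 U2 H s Hs0). fold m in U. fold (G s) in U.
      assert (0 < s^(n-2)) by (apply pow_lt; lra).
      assert (U' : G s / (m * s^(n-2)) <= u s).
      { apply (Rmult_le_reg_r (m * s^(n-2))); [nra|].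
        unfold Rdiv. rewrite Rmult_assoc, Rinv_l by nra. lra. }
      assert (R1 : Rpower (G s / (m * s^(n-2))) P <= Rpower (u s) P).
      { apply Rle_Rpower_l. rewrite HP; lra. split; auto.
        apply Rdiv_lt_0_compat; nra. }
      rewrite Rpower_split in R1 by lra.
      assert (EP : INR (n-2) * P = INR n) by (unfold P; field; rewrite INR_n2 by auto; lra).
      rewrite EP in R1.
      assert (K1 : k <= K s) by (apply HK; lra).
      assert (E1 : s^(n-1) * Rpower s (- INR n) = / s).
      { rewrite <- Rpower_pow by auto. rewrite <- Rpower_plus.
        rewrite minus_INR by lia. replace (INR n - INR 1 + - INR n) with (-(1)) by (simpl; ring).
        rewrite Rpower_Ropp, Rpower_1; auto. }
      assert (E2 : Rpower (G s) (-q-1) * Rpower (G s) P = 1).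
      { rewrite <- Rpower_plus. rewrite HP. replace (-q - 1 + (q+1)) with 0 by ring.
        apply Rpower_O; auto. }
      assert (0 < Rpower (G s) (-q-1)) by apply Rpower_pos.
      assert (0 < Rpower (u s) P) by apply Rpower_pos.
      assert (0 < s^(n-1)) by (apply pow_lt; lra).
      assert (B1 : c * / s <= Rpower (G s) (-q-1) * (s^(n-1) * K s * Rpower (u s) P)).
      { apply Rle_trans with (Rpower (G s) (-q-1) * (s^(n-1) * k *
           (Rpower (G s) P * Rpower m (- P) * Rpower s (- INR n)))).
        - right. transitivity (k * Rpower m (-P) * (Rpower (G s)(-q-1) * Rpower (G s) P) *
             (s^(n-1) * Rpower s (- INR n))); [rewrite E1, E2; unfold c; ring | ring].
        - apply Rmult_le_compat_l; [lra|].
          assert (0 < Rpower (G s) P * Rpower m (- P) * Rpower s (- INR n))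
            by (repeat apply Rmult_lt_0_compat; apply Rpower_pos).
          apply Rmult_le_compat; [nra|lra|apply Rmult_le_compat_l; lra|lra]. }
      apply (Rmult_le_compat_l q) in B1; [|lra].
      match goal with |- ?a <= 0 => replace a with (q * (c * / s) - q * (Rpower (G s) (- q - 1) * (s ^ (n - 1) * K s * Rpower (u s) P))) by ring end.
      lra. }
  unfold Phi in HPhi.
  assert (0 < Rpower (G delta) (-q)) by apply Rpower_pos.
  unfold G in HPhi. fold m q. fold P c.
  assert (q * c * (ln delta - ln r1) = q * c * ln delta - q * c * ln r1) by ring.
  unfold G in H0. lra.
Qed.

Lemma ln_le_mono x y : 0 < x -> x <= y -> ln x <= ln y.
Proof. intros Hx [H|H]; [left; apply ln_increasing; auto | subst; lra]. Qed.

Lemma exp_le_mono x y : x <= y -> exp x <= exp y.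
Proof. intros [H|H]; [left; apply exp_increasing; auto | subst; lra]. Qed.

Lemma Palg n : (3<=n)%nat -> INR n / INR (n-2) = 2 / (INR n - 2) + 1 /\
   INR n / INR (n-2) = INR n * (2 / (INR n - 2)) / 2.
Proof.
  intros. rewrite INR_n2 by auto. assert (3 <= INR n) by (apply INR_ge3; auto).
  split; field; lra.
Qed.

Lemma core n K (Hn : (3<=n)%nat) (HK : forall r, 0<=r -> 0<=K r) B (HB0 : 0 < B)
  (HB : forall r, 0<=r -> K r <= B) k delta (Hk : 0 < k) (Hd : 0 < delta)
  (Hkd : forall s, 0<=s<=delta -> k <= K s) :
  exists M, 0 < M /\ forall u U1 U2 beta, 0 < beta -> ODEhyp n K u U1 U2 ->
    (forall eps, 0 < eps -> exists R0, forall r, 0 <= r -> R0 < r -> Rabs (u r - beta) < eps) ->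
    forall r, 0 <= r -> u r <= M.
Proof.
  set (N := INR n). set (m := N - 2). set (P := INR n / INR (n-2)). set (q := 2 / m).
  set (c := k * Rpower m (-P)).
  set (c0 := k * exp (- P * ln 2 + N * (ln N - ln B) / 2) / N).
  set (C2 := Rpower c0 (-q)).
  set (L1 := (ln N - ln B - 2 * ln delta + 2 * C2 / (q * c)) / q).
  assert (HN: 3 <= N) by (apply INR_ge3; auto).
  assert (HP : P = q + 1) by (apply Palg; auto).
  assert (HP2 : P = N * q / 2) by (apply Palg; auto).
  assert (Hm : 1 <= m) by (unfold m; lra).
  assert (Hq : 0 < q) by (unfold q; apply Rdiv_lt_0_compat; lra).
  assert (Hc : 0 < c) by (unfold c; apply Rmult_lt_0_compat; auto; apply Rpower_pos).
  assert (Hc0 : 0 < c0) by (unfold c0; apply Rdiv_lt_0_compat; [apply Rmult_lt_0_compat; auto; apply exp_pos|lra]).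
  assert (HC2 : 0 < C2) by apply Rpower_pos.
  exists (exp L1). split; [apply exp_pos|].
  intros u U1 U2 beta Hb H Hlim r Hr.
  assert (Hub := u_ge_beta n K u U1 U2 beta H Hlim).
  set (a := u 0).
  assert (Ha : 0 < a) by (specialize (Hub 0 ltac:(lra)); unfold a; lra).
  assert (Hura : u r <= a) by (apply (u_nonincr n K u U1 U2 H); lra).
  enough (ln a <= L1) as HL.
  { apply Rle_trans with a; auto. rewrite <- (exp_ln a) by auto. apply exp_le_mono; auto. }
  set (rho := (ln N - ln B - q * ln a) / 2).
  set (r1 := exp rho).
  assert (Hr1 : 0 < r1) by apply exp_pos.
  assert (Hlr1 : ln r1 = rho) by apply ln_exp.
  assert (Hqc : 0 < q * c) by (apply Rmult_lt_0_compat; auto).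
  assert (T : 0 < 2 * C2 / (q * c)) by (apply Rdiv_lt_0_compat; lra).
  destruct (Rle_dec r1 delta) as [Hrd|Hrd].
  -
    assert (D := u_decr_bound n K u U1 U2 B H HB r1 ltac:(lra)). fold P a in D.
    rewrite rpow_pos in D by auto.
    assert (E1 : B * Rpower a P * r1^2 = a * N).
    { unfold Rpower, r1. simpl. rewrite Rmult_1_r. rewrite Rmult_assoc, <- !exp_plus.
      replace (P * ln a + (rho + rho)) with (ln a + ln N + - ln B)
        by (unfold rho; rewrite HP; field).
      rewrite !exp_plus, exp_Ropp, !exp_ln by lra. field. lra. }
    assert (Hu1 : a / 2 <= u r1).
    { rewrite E1 in D. replace (a * N / (2 * INR n)) with (a/2) in D by (fold N; field; lra). lra. }
    assert (GL := G_lower n K u U1 U2 k delta H Hkd ltac:(lra) r1 ltac:(lra)). fold P in GL.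
    rewrite rpow_pos in GL by lra.
    assert (R1 : Rpower (a/2) P <= Rpower (u r1) P) by (apply Rle_Rpower_l; lra).
    assert (E2 : k * Rpower (a/2) P * r1^n / N = c0).
    { unfold c0. rewrite <- Rpower_pow by auto. unfold Rpower. unfold r1 at 1. rewrite ln_exp.
      unfold Rdiv. rewrite Rmult_assoc with (r1 := k). rewrite <- exp_plus.
      rewrite ln_mult by lra. rewrite ln_Rinv by lra.
      f_equal. f_equal. f_equal. unfold rho. fold N. rewrite HP2. field. }
    assert (0 < r1^n) by (apply pow_lt; auto).
    assert (GL2 : c0 <= -(r1^(n-1)*U1 r1)).
    { rewrite <- E2. eapply Rle_trans; [|apply GL]. unfold Rdiv. fold N.
      apply Rmult_le_compat_r; [left; apply Rinv_0_lt_compat; lra|].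
      apply Rmult_le_compat_r; [lra|]. apply Rmult_le_compat_l; lra. }
    assert (LS := log_step n K u U1 U2 k delta beta H Hk Hkd Hb Hub r1 ltac:(lra)).
    fold N m P q in LS. fold c in LS.
    assert (R2 : Rpower (-(r1^(n-1)*U1 r1)) (-q) <= C2).
    { unfold C2, Rpower. apply exp_le_mono.
      assert (ln c0 <= ln (-(r1^(n-1)*U1 r1))) by (apply ln_le_mono; auto).
      nra. }
    rewrite Hlr1 in LS.
    assert (q * c * (ln delta - rho) <= C2)  by (change (k * Rpower m (- (N / INR (n - 2)))) with c in LS; lra).
    assert (ln delta - rho <= C2 / (q * c)).
    { apply (Rmult_le_reg_l (q*c)); auto. unfold Rdiv. rewrite <- Rmult_assoc, Rinv_r_simpl_m by lra. lra. }
    unfold rho in *.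
    assert (q * ln a <= ln N - ln B - 2 * ln delta + 2 * C2 / (q * c)).
    { unfold Rdiv in *. lra. }
    unfold L1. apply (Rmult_le_reg_l q); auto. unfold Rdiv. 
    rewrite <- Rmult_assoc, Rinv_r_simpl_m by lra. lra.
  - assert (delta < r1) by lra.
    assert (ln delta < rho) by (rewrite <- Hlr1; apply ln_increasing; auto).
    unfold rho in *.
    assert (q * ln a <= ln N - ln B - 2 * ln delta + 2 * C2 / (q * c)) by lra.
    unfold L1. apply (Rmult_le_reg_l q); auto. unfold Rdiv.
    rewrite <- Rmult_assoc, Rinv_r_simpl_m by lra. unfold Rdiv in *. lra.
Qed.

Definition e0 (r : R) : nat -> R := fun j => if Nat.eqb j 0 then r else 0.

Lemma sum_e0 r k : sum_upto (S k) (fun j => e0 r j * e0 r j) = r * r.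
Proof.
  induction k.
  - simpl. unfold e0. simpl. ring.
  - change (sum_upto (S (S k)) (fun j => e0 r j * e0 r j)) with
      (sum_upto (S k) (fun j => e0 r j * e0 r j) + e0 r (S k) * e0 r (S k)).
    rewrite IHk. unfold e0. simpl. ring.
Qed.

Lemma norm_e0 n r : (1 <= n)%nat -> normn n (e0 r) = Rabs r.
Proof.
  intros. unfold normn. destruct n; [lia|]. rewrite sum_e0.
  rewrite <- sqrt_Rsqr_abs. reflexivity.
Qed.

Lemma shift_e0 r t : shift (e0 r) 0 t = e0 (r + t).
Proof.
  apply functional_extensionality. intro j. unfold shift, e0.
  destruct (Nat.eqb j 0); reflexivity.
Qed.

Lemma translate f g x l : (forall t, f t = g (x + t)) -> derivable_pt_lim f 0 l ->
  derivable_pt_lim g x l.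
Proof.
  intros E D eps Heps. destruct (D eps Heps) as [d Hd]. exists d. intros h Hh Hhd.
  specialize (Hd h Hh Hhd). rewrite !E in Hd. rewrite Rplus_0_l, Rplus_0_r in Hd. exact Hd.
Qed.

Lemma partial0 f r l : has_partial f 0 (e0 r) l -> derivable_pt_lim (fun s => f (e0 s)) r l.
Proof.
  intros D. apply (translate (fun t => f (shift (e0 r) 0 t))); auto.
  intro t. rewrite shift_e0. reflexivity.
Qed.

Lemma even_deriv0 (u : R -> R) l : (forall s, u (-s) = u s) -> derivable_pt_lim u 0 l -> l = 0.
Proof.
  intros Ev D.
  assert (D2 : derivable_pt_lim (fun s => u (- s)) 0 (l * -1)).
  { apply (dpl_comp (fun s => - s) u 0 (-1) l).
    - apply (dpl_eq _ _ (-1 * 1)); [ring|]. apply (derivable_pt_lim_ext (fun s => -1 * s)); [intro; ring|].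
      apply dpl_scal, dpl_id.
    - replace (- 0) with 0 by ring. exact D. }
  apply (derivable_pt_lim_ext _ u) in D2; [|intro; apply Ev].
  assert (E := uniqueness_limite u 0 l (l * -1) D D2). lra.
Qed.

Lemma radial_e0 n v x : (1 <= n)%nat -> radially_symmetric n v ->
  v x = v (e0 (normn n x)).
Proof.
  intros Hn Hr. apply Hr. rewrite norm_e0 by auto. rewrite Rabs_right; auto.
  unfold normn. apply Rle_ge, sqrt_pos.
Qed.

Lemma sum_yp r i t k : (1 <= i)%nat ->
  sum_upto (S k) (fun j => shift (e0 r) i t j * shift (e0 r) i t j) =
  r * r + (if Nat.leb i k then t * t else 0).
Proof.
  intros Hi. induction k.
  - simpl. unfold shift, e0. destruct (Nat.eqb_spec 0 i); [lia|].
    destruct (Nat.leb_spec i 0); [lia|]. simpl. ring.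
  - change (sum_upto (S (S k)) (fun j => shift (e0 r) i t j * shift (e0 r) i t j)) with
      (sum_upto (S k) (fun j => shift (e0 r) i t j * shift (e0 r) i t j) +
       shift (e0 r) i t (S k) * shift (e0 r) i t (S k)).
    rewrite IHk. unfold shift.
    destruct (Nat.eqb_spec (S k) i); destruct (Nat.leb_spec i k); destruct (Nat.leb_spec i (S k));
      try lia; unfold e0; simpl; ring.
Qed.

Lemma norm_yp n r i t : (1 <= i)%nat -> (i < n)%nat ->
  normn n (shift (e0 r) i t) = sqrt (r * r + t * t).
Proof.
  intros. unfold normn. destruct n; [lia|]. rewrite sum_yp by auto.
  destruct (Nat.leb_spec i n); [reflexivity|lia].
Qed.

Lemma shift_yp r i t s : shift (shift (e0 r) i t) i s = shift (e0 r) i (t + s).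
Proof.
  apply functional_extensionality. intro j. unfold shift.
  destruct (Nat.eqb j i); [ring|reflexivity].
Qed.

Lemma rho_pos r t : 0 < r -> 0 < sqrt (r*r + t*t).
Proof. intros. apply sqrt_lt_R0. nra. Qed.

Lemma rho_deriv r t : 0 < r ->
  derivable_pt_lim (fun t => sqrt (r*r + t*t)) t (t / sqrt (r*r + t*t)).
Proof.
  intros Hr. assert (Hp := rho_pos r t Hr).
  apply (dpl_eq _ _ (/ (2 * sqrt (r*r + t*t)) * (0 + (1 * t + t * 1)))); [field; lra|].
  apply (dpl_comp (fun t => r*r + t*t) sqrt).
  - apply dpl_plus; [apply dpl_const|apply dpl_mult; apply dpl_id].
  - apply derivable_pt_lim_sqrt. nra.
Qed.

Lemma rho0 r : 0 < r -> sqrt (r*r + 0*0) = r.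
Proof. intros. replace (r*r+0*0) with (r*r) by ring. apply sqrt_square. lra. Qed.

Lemma D2ii n v D1 D2 i r : (3 <= n)%nat -> (1 <= i)%nat -> (i < n)%nat ->
  C2n n v D1 D2 -> radially_symmetric n v -> 0 < r ->
  D2 i i (e0 r) = D1 0%nat (e0 r) / r.
Proof.
  intros Hn Hi1 Hin HC Hrad Hr.
  destruct HC as (_ & HC1 & HC2).
  set (u := fun s => v (e0 s)). set (U1 := fun s => D1 0%nat (e0 s)).
  set (rho := fun t => sqrt (r*r + t*t)).
  assert (Hu : forall s, derivable_pt_lim u s (U1 s)).
  { intro s. apply partial0. apply HC1. lia. }
  assert (HU : forall s, derivable_pt_lim U1 s (D2 0%nat 0%nat (e0 s))).
  { intro s. apply partial0. apply HC2; lia. }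
  assert (StepA : forall t, D1 i (shift (e0 r) i t) = U1 (rho t) * (t / rho t)).
  { intro t.
    destruct (HC1 i ltac:(lia)) as [_ Hp]. specialize (Hp (shift (e0 r) i t)).
    unfold has_partial in Hp.
    apply (translate _ (fun tau => u (rho tau)) t) in Hp.
    2: { intro s. rewrite shift_yp. unfold u, rho. rewrite (radial_e0 n v) by (auto; lia).
         rewrite norm_yp by auto. reflexivity. }
    apply (uniqueness_limite (fun tau => u (rho tau)) t); auto.
    apply (dpl_comp rho u t). apply rho_deriv; auto. apply Hu. }
  destruct (HC2 i i ltac:(lia) ltac:(lia)) as [_ Hp2].
  specialize (Hp2 (e0 r)). unfold has_partial in Hp2.
  set (g := fun t => U1 (rho t) * Rpower (rho t) (- (1))).
  apply (derivable_pt_lim_ext _ (fun t => t * g t)) in Hp2.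
  2: { intro t. rewrite StepA. unfold g. rewrite Rpower_Ropp, Rpower_1 by (apply rho_pos; auto).
       unfold Rdiv. ring. }
  assert (Dg : exists l, derivable_pt_lim g 0 l).
  { eexists. apply dpl_mult.
    - apply (dpl_comp rho U1). apply rho_deriv; auto. apply HU.
    - apply (dpl_comp rho (fun x => Rpower x (- (1)))). apply rho_deriv; auto.
      apply derivable_pt_lim_power. apply rho_pos; auto. }
  destruct Dg as [l Dg].
  assert (Dpsi := dpl_mult (fun t => t) g 0 1 l (dpl_id 0) Dg).
  assert (E := uniqueness_limite _ 0 _ _ Hp2 Dpsi).
  rewrite E. unfold g, rho. rewrite rho0 by auto.
  rewrite Rpower_Ropp, Rpower_1 by auto. unfold U1, Rdiv. ring.
Qed.

Lemma lap_e0 n v D1 D2 r : (3 <= n)%nat -> C2n n v D1 D2 -> radially_symmetric n v -> 0 < r ->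
  laplacian n D2 (e0 r) = D2 0%nat 0%nat (e0 r) + (INR n - 1) * (D1 0%nat (e0 r) / r).
Proof.
  intros Hn HC Hrad Hr.
  assert (L : forall k, (S k <= n)%nat -> sum_upto (S k) (fun i => D2 i i (e0 r)) =
                 D2 0%nat 0%nat (e0 r) + INR k * (D1 0%nat (e0 r) / r)).
  { induction k; intros Hk.
    - simpl. ring.
    - change (sum_upto (S (S k)) (fun i => D2 i i (e0 r))) with
        (sum_upto (S k) (fun i => D2 i i (e0 r)) + D2 (S k) (S k) (e0 r)).
      rewrite IHk by lia. rewrite (D2ii n v D1 D2 (S k) r Hn ltac:(lia) ltac:(lia) HC Hrad Hr). rewrite S_INR. ring. }
  unfold laplacian. destruct n as [|n']; [lia|]. rewrite L by lia. rewrite S_INR. ring.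
Qed.

Theorem proposition7p2 (n : nat) (Hn : (3 <= n)%nat) (K0 : R -> R)
  (HK0nonneg : forall r, 0 <= r -> 0 <= K0 r)
  (HK0bdd : exists B, forall r, 0 <= r -> K0 r <= B)
  (HK0cont : forall r eps, 0 <= r -> 0 < eps -> exists delta, 0 < delta /\
      forall s, 0 <= s -> Rabs (s - r) < delta -> Rabs (K0 s - K0 r) < eps)
  (HK00 : 0 < K0 0) :
  exists M, 0 < M /\
    forall (v : (nat -> R) -> R) (D1 : nat -> (nat -> R) -> R)
           (D2 : nat -> nat -> (nat -> R) -> R) (beta : R),
      0 < beta ->
      C2n n v D1 D2 ->
      radially_symmetric n v ->
      (forall x, 0 <= v x) ->
      (forall x, laplacian n D2 x
                 + K0 (normn n x) * rpow (v x) (INR n / INR (n - 2)) = 0) ->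
      (forall eps, 0 < eps -> exists R0, forall x,
          R0 < normn n x -> Rabs (v x - beta) < eps) ->
      forall x, v x <= M.
Proof.
  destruct HK0bdd as [B HB].
  assert (HB0 : 0 < B) by (specialize (HB 0 ltac:(lra)); lra).
  destruct (HK0cont 0 (K0 0 / 2) ltac:(lra) ltac:(lra)) as [d0 [Hd0 Hc]].
  assert (Hkd : forall s, 0 <= s <= d0/2 -> K0 0 / 2 <= K0 s).
  { intros s Hs. assert (Rabs (s - 0) < d0) by (rewrite Rminus_0_r, Rabs_right; lra).
    specialize (Hc s ltac:(lra) H). apply Rabs_def2 in Hc. lra. }
  destruct (core n K0 Hn HK0nonneg B HB0 HB (K0 0 / 2) (d0/2) ltac:(lra) ltac:(lra) Hkd)
    as [M [HM0 HM]].
  exists M. split; auto.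
  intros v D1 D2 beta Hb HC Hrad Hpos Hode Hlim x.
  set (u := fun s => v (e0 s)). set (U1 := fun s => D1 0%nat (e0 s)).
  set (U2 := fun s => D2 0%nat 0%nat (e0 s)).
  assert (Hn1 : (1 <= n)%nat) by lia.
  assert (HCc := HC). destruct HCc as (_ & HC1 & HC2).
  assert (Hu : forall s, derivable_pt_lim u s (U1 s)).
  { intro s. apply partial0. apply HC1. lia. }
  assert (HU : forall s, derivable_pt_lim U1 s (U2 s)).
  { intro s. apply partial0. apply HC2; lia. }
  assert (Hodeh : ODEhyp n K0 u U1 U2).
  { repeat split; auto.
    - apply (even_deriv0 u); auto. intro s. unfold u. apply Hrad.
      rewrite !norm_e0 by auto. apply Rabs_Ropp.
    - intros r Hr. unfold u. apply Hpos.
    - intros r Hr. specialize (Hode (e0 r)). rewrite (lap_e0 n v D1 D2 r Hn HC Hrad Hr) in Hode.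
      rewrite (norm_e0 n r Hn1), Rabs_right in Hode by lra.
      unfold U2, U1, u. unfold Rdiv in *. lra. }
  assert (Hlim' : forall eps, 0 < eps -> exists R0, forall r, 0 <= r -> R0 < r -> Rabs (u r - beta) < eps).
  { intros eps Heps. destruct (Hlim eps Heps) as [R0 HR0]. exists R0. intros r Hr HRr.
    apply HR0. rewrite norm_e0, Rabs_right by (auto; lra). auto. }
  rewrite (radial_e0 n v x Hn1 Hrad).
  apply (HM u U1 U2 beta Hb Hodeh Hlim').
  unfold normn. apply sqrt_pos.
Qed.
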